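(* Let $T$ be a c.n.u. contraction on $H$ and let $(H_+,H_-,\Gamma_+,\Gamma_-)$ be a boundary quadruple for $A_T^{\perp_s}$ with contractive Weyl function $B$. Then the localized kernel $\mathcal{K}$ satisfies: for $\lambda,\mu\in\mathbb{D}_+$: $\mathcal{K}(\lambda,\mu)=\dfrac{I-B(\lambda)B(\mu)^*}{1-\lambda\bar\mu}$; for $\lambda,\mu\in\mathbb{D}_-$: $\mathcal{K}(\lambda,\mu)=\dfrac{I-B(\bar\lambda)^*B(\bar\mu)}{1-\lambda\bar\mu}$; for $\lambda\in\mathbb{D}_+$, $\mu\in\mathbb{D}_-$: $\mathcal{K}(\lambda,\mu)=\dfrac{B(\lambda)-B(\bar\mu)}{\lambda-\bar\mu}$; for $\lambda\in\mathbb{D}_-$, $\mu\in\mathbb{D}_+$: $\mathcal{K}(\lambda,\mu)=\dfrac{B(\bar\lambda)^*-B(\mu)^*}{\lambda-\bar\mu}$; where in the last two cases, when $\lambda=\bar\mu$, the right-hand side is understood as its limit.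
   Context: $H$ is an infinite-dimensional separable complex Hilbert space with inner product $(\cdot,\cdot)_H$; $T\in\mathbb{B}(H)$, $\|T\|\le1$, is completely non-unitary. $\mathbb{K}=\ker(I-T^*T)$. $\mathbb{H}=H\oplus_\perp H$ with $[(x_1,x_2),(y_1,y_2)]=i(x_1,y_1)_H-i(x_2,y_2)_H$; $S^{\perp_s}=\{a:[a,b]=0\ \forall b\in S\}$; $A_T=\{(x,Tx):x\in\mathbb{K}\}$. $\mathbb{D}_\pm$ are two copies of the open unit disc; for $\lambda\in\mathbb{D}_\pm$, $\bar\lambda$ (conjugate coordinate) is regarded as a point of $\mathbb{D}_\mp$. $N_\lambda=\{(x,\lambda x)\}\cap A_T^{\perp_s}$ ($\lambda\in\mathbb{D}_+$), $N_\lambda=\{(\lambda x,x)\}\cap A_T^{\perp_s}$ ($\lambda\in\mathbb{D}_-$), $x$ ranging over $H$. A boundary quadruple: Hilbert spaces $H_\pm$ and linear $\Gamma_\pm:A_T^{\perp_s}\to H_\pm$ with $(\Gamma_+,\Gamma_-)$ bounded, onto $H_+\oplus_\perp H_-$, kernel $A_T$, and $[a,b]=i(\Gamma_+a,\Gamma_+b)-i(\Gamma_-a,\Gamma_-b)$. Then for $\lambda\in\mathbb{D}_+$, $\Gamma_+|_{N_\lambda}$ is a bijection onto $H_+$ and $\Gamma_-a=B(\lambda)\Gamma_+a$ ($a\in N_\lambda$) for a unique $B(\lambda)\in\mathbb{B}(H_+,H_-)$, $\|B(\lambda)\|<1$, holomorphic in $\lambda$; for $\lambda\in\mathbb{D}_-$,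 $\Gamma_-|_{N_\lambda}$ is a bijection onto $H_-$ and $\Gamma_+a=B(\bar\lambda)^*\Gamma_-a$. $\gamma_+(\lambda)x\in N_\lambda$ with $\Gamma_+\gamma_+(\lambda)x=x$ ($\lambda\in\mathbb{D}_+,x\in H_+$); $\gamma_-(\lambda)x\in N_\lambda$ with $\Gamma_-\gamma_-(\lambda)x=x$ ($\lambda\in\mathbb{D}_-,x\in H_-$). $\varphi_+=pr_1\circ\gamma_+$, $\varphi_-=pr_2\circ\gamma_-$ ($pr_i$: projection of $\mathbb{H}$ onto the $i$-th copy of $H$). Bundles: $E_\lambda=pr_1(N_\lambda)$ ($\lambda\in\mathbb{D}_+$), $E_\lambda=pr_2(N_\lambda)$ ($\lambda\in\mathbb{D}_-$); $F^\dagger_\lambda=E_{\bar\lambda}$; $F_\lambda$ = continuous conjugate-linear functionals on $F^\dagger_\lambda$, pairing $((\cdot,\cdot))$. For $x\in H$, $\hat x(\lambda)\in F_\lambda$ is $\omega\mapsto(x,\omega)_H$. Trivialization: for $\lambda\in\mathbb{D}_+$ define $\varphi_-^\dagger(\lambda):F_\lambda\to H_-$ by $(\varphi_-^\dagger(\lambda)\omega,y)_{H_-}=((\omega,\varphi_-(\bar\lambda)y))$ for all $y\in H_-$; for $\lambda\in\mathbb{D}_-$ define $\varphi_+^\dagger(\lambda):F_\lambda\to H_+$ by $(\varphi_+^\dagger(\lambda)\omega,y)_{H_+}=((\omega,\varphi_+(\bar\lambda)y))$. For a section $s$ of $F$, $f_s(\lambda)=\varphi_-^\dagger(\lambda)s(\lambda)\in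 H_-$ for $\lambda\in\mathbb{D}_+$ and $f_s(\lambda)=\varphi_+^\dagger(\lambda)s(\lambda)\in H_+$ for $\lambda\in\mathbb{D}_-$. The localized kernel: for $\mu\in\mathbb{D}_+$, $\mathcal{K}(\lambda,\mu)y:=f_{\hat z}(\lambda)$ with $z=\varphi_-(\bar\mu)y$, $y\in H_-$; for $\mu\in\mathbb{D}_-$, $\mathcal{K}(\lambda,\mu)y:=f_{\hat z}(\lambda)$ with $z=\varphi_+(\bar\mu)y$, $y\in H_+$. (This is the kernel $K(\lambda,\mu)=\iota_\lambda^\dagger\iota_\mu$ of the model space written in these trivializations.) *)

(* Defs.v *)
From mathcomp Require Import all_boot all_order all_algebra.
From mathcomp Require Import reals.
From mathcomp Require Export complex.
From Stdlib Require Import ClassicalEpsilon.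
Set Implicit Arguments. Unset Strict Implicit. Unset Printing Implicit Defensive.
Import GRing.Theory Num.Theory.
Local Open Scope ring_scope.

Definition is_cauchy (R : realType) (V : lmodType R[i]) (n2 : V -> R[i])
    (u : nat -> V) : Prop :=
  forall e : R[i], 0 < e -> exists N : nat, forall m n : nat,
    (N <= m)%N -> (N <= n)%N -> n2 (u m - u n) < e.

Definition converges_to (R : realType) (V : lmodType R[i]) (n2 : V -> R[i])
    (u : nat -> V) (l : V) : Prop :=
  forall e : R[i], 0 < e -> exists N : nat, forall n : nat,
    (N <= n)%N -> n2 (u n - l) < e.

Record hilbert (R : realType) := Hilbert {
  hsort :> lmodType R[i];
  hip : hsort -> hsort -> R[i];
  hip_linl : forall (a : R[i]) (x y z : hsort),
      hip (a *: x + y) z = a * hip x z + hip y z;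
  hip_sym : forall x y : hsort, hip y x = (hip x y)^*;
  hip_ge0 : forall x : hsort, 0 <= hip x x;
  hip_def : forall x : hsort, hip x x = 0 -> x = 0;
  hip_complete : forall u : nat -> hsort,
      is_cauchy (fun x => hip x x) u ->
      exists l, converges_to (fun x => hip x x) u l
}.
Arguments hip {R} h.

Definition hnorm (R : realType) (X : hilbert R) (x : X) : R[i] :=
  sqrtC (hip X x x).

Definition separable (R : realType) (X : hilbert R) : Prop :=
  exists d : nat -> X, forall (x : X) (e : R[i]), 0 < e ->
    exists n : nat, hnorm (x - d n) < e.

Definition infinite_dim (R : realType) (X : hilbert R) : Prop :=
  forall n : nat, exists v : 'I_n -> X,
    forall c : 'I_n -> R[i], \sum_(i < n) c i *: v i = 0 -> forall i, c i = 0.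

Definition is_linear (R : realType) (X Y : hilbert R) (f : X -> Y) : Prop :=
  forall (a : R[i]) (x y : X), f (a *: x + y) = a *: f x + f y.

Definition adjoint (R : realType) (X Y : hilbert R) (f : X -> Y) : Y -> X :=
  fun y => epsilon (inhabits (0 : X))
             (fun x => forall u : X, hip Y (f u) y = hip X u x).

Definition is_contraction (R : realType) (H : hilbert R) (T : H -> H) : Prop :=
  is_linear T /\ forall x : H, hnorm (T x) <= hnorm x.

Definition closed_subspace (R : realType) (H : hilbert R) (M : H -> Prop) : Prop :=
  M 0 /\ (forall (a : R[i]) x y, M x -> M y -> M (a *: x + y)) /\
  (forall (u : nat -> H) l, (forall n, M (u n)) ->
      converges_to (fun x => hip H x x) u l -> M l).

Definition cnu (R : realType) (H : hilbert R) (T : H -> H) : Prop :=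
  forall M : H -> Prop, closed_subspace M ->
    (forall x, M x -> M (T x)) -> (forall x, M x -> M (adjoint T x)) ->
    (forall x, M x -> adjoint T (T x) = x /\ T (adjoint T x) = x) ->
    forall x, M x -> x = 0.

Section Krein.
Variables (R : realType) (H : hilbert R) (T : H -> H).

Definition kform (a b : H * H) : R[i] :=
  'i * hip H a.1 b.1 - 'i * hip H a.2 b.2.

Definition KK (x : H) : Prop := x - adjoint T (T x) = 0.

Definition AT (a : H * H) : Prop := exists x, KK x /\ a = (x, T x).

Definition ATperp (a : H * H) : Prop := forall b, AT b -> kform a b = 0.

Definition Nplus (l : R[i]) (a : H * H) : Prop :=
  (exists x, a = (x, l *: x)) /\ ATperp a.
Definition Nminus (l : R[i]) (a : H * H) : Prop :=
  (exists x, a = (l *: x, x)) /\ ATperp a.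

End Krein.

(* The maps Gamma_+- are given as total functions on H x H; only their
   restriction to A_T^{perp_s} matters (all conditions refer to it). *)
Definition boundary_quadruple (R : realType) (H : hilbert R) (T : H -> H)
    (Hp Hm : hilbert R) (Gp : H * H -> Hp) (Gm : H * H -> Hm) : Prop :=
  (forall (c : R[i]) (a b : H * H), ATperp T a -> ATperp T b ->
      Gp (c *: a.1 + b.1, c *: a.2 + b.2) = c *: Gp a + Gp b /\
      Gm (c *: a.1 + b.1, c *: a.2 + b.2) = c *: Gm a + Gm b) /\
  (exists M : R[i], forall a, ATperp T a ->
      hip Hp (Gp a) (Gp a) + hip Hm (Gm a) (Gm a)
        <= M * (hip H a.1 a.1 + hip H a.2 a.2)) /\
  (forall (yp : Hp) (ym : Hm), exists a, ATperp T a /\ Gp a = yp /\ Gm a = ym) /\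
  (forall a, (ATperp T a /\ Gp a = 0 /\ Gm a = 0) <-> AT T a) /\
  (forall a b, ATperp T a -> ATperp T b ->
      kform a b = 'i * hip Hp (Gp a) (Gp b) - 'i * hip Hm (Gm a) (Gm b)).

Section Weyl.
Variables (R : realType) (H : hilbert R) (T : H -> H) (Hp Hm : hilbert R)
          (Gp : H * H -> Hp) (Gm : H * H -> Hm).

Definition gammap (l : R[i]) (y : Hp) : H * H :=
  epsilon (inhabits (0, 0)) (fun a => Nplus T l a /\ Gp a = y).
Definition gammam (l : R[i]) (y : Hm) : H * H :=
  epsilon (inhabits (0, 0)) (fun a => Nminus T l a /\ Gm a = y).

Definition Weyl (l : R[i]) (y : Hp) : Hm := Gm (gammap l y).

Definition phip (l : R[i]) (y : Hp) : H := (gammap l y).1.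
Definition phim (l : R[i]) (y : Hm) : H := (gammam l y).2.

(* trivialisations phi_-^dagger(l) (l in D_+) and phi_+^dagger(l)
   (l in D_-); an element of F_l is given as a functional s on H, of which
   only the restriction to E_{conj l} matters. *)
Definition phimdag (l : R[i]) (s : H -> R[i]) : Hm :=
  epsilon (inhabits (0 : Hm))
    (fun w => forall y : Hm, hip Hm w y = s (phim l^* y)).
Definition phipdag (l : R[i]) (s : H -> R[i]) : Hp :=
  epsilon (inhabits (0 : Hp))
    (fun w => forall y : Hp, hip Hp w y = s (phip l^* y)).

Definition hat (x : H) : H -> R[i] := fun w => hip H x w.

(* localized kernel K(l, m), split by the sheets of l and m:
   pp : l, m in D_+   (H_- -> H_-)
   mm : l, m in D_-   (H_+ -> H_+)
   pm : l in D_+, m in D_-   (H_+ -> H_-)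
   mp : l in D_-, m in D_+   (H_- -> H_+) *)
Definition Kpp (l m : R[i]) (y : Hm) : Hm := phimdag l (hat (phim m^* y)).
Definition Kmm (l m : R[i]) (y : Hp) : Hp := phipdag l (hat (phip m^* y)).
Definition Kpm (l m : R[i]) (y : Hp) : Hm := phimdag l (hat (phip m^* y)).
Definition Kmp (l m : R[i]) (y : Hm) : Hp := phipdag l (hat (phim m^* y)).

End Weyl.

(* Main.v *)
Require Import Defs.
From mathcomp Require Import all_boot all_order all_algebra.
From mathcomp Require Import reals complex.
From mathcomp Require Import ring lra.
From mathcomp Require Import classical_sets boolp.
From Stdlib Require Import ClassicalEpsilon.
Import Order.TTheory GRing.Theory Num.Theory ComplexField.
Set Implicit Arguments. Unset Strict Implicit. Unset Printing Implicit Defensive.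
Local Open Scope ring_scope.

Section Basics.
Variable R : realType.
Local Notation C := R[i].
Local Notation rc x := ((x)%:C)%C.

Lemma conjE (z : C) : z^* = (conjc z)%C. Proof. by []. Qed.

Lemma rc_real (z : C) : 0 <= z -> z = rc (complex.Re z).
Proof. by case: z => a b; rewrite lecE /= => /andP[/eqP -> _]. Qed.

Lemma rc_ge0 (z : C) : 0 <= z -> 0 <= complex.Re z.
Proof. by case: z => a b; rewrite lecE /= => /andP[_ ]. Qed.

Lemma rc_gt0 (z : C) : 0 < z -> 0 < complex.Re z.
Proof. by case: z => a b; rewrite ltcE /= => /andP[_ ]. Qed.

Lemma conj_rc (r : R) : (rc r)^* = rc r.
Proof. by rewrite conjE /= oppr0. Qed.

Lemma normcE (z : C) : `|z| = rc (Normc.normc z). Proof. by []. Qed.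

Lemma normc_ge0' (z : C) : 0 <= Normc.normc z.
Proof. by case: z => a b /=; rewrite sqrtr_ge0. Qed.

Lemma Re_le_normc (z : C) : complex.Re z <= Normc.normc z.
Proof.
case: z => a b /=.
have h : 0 <= a ^+ 2 + b ^+ 2 by rewrite addr_ge0 ?sqr_ge0.
have := sqr_sqrtr h; have := sqrtr_ge0 (a ^+ 2 + b ^+ 2).
set s := Num.sqrt _ => s0 hs. nra.
Qed.

Lemma sqrtC_rc (r : R) : 0 <= r -> sqrtC (rc r) = rc (Num.sqrt r).
Proof.
move=> r0; rewrite -{1}(sqr_sqrtr r0) rmorphXn sqrCK //.
by rewrite lecR sqrtr_ge0.
Qed.

Lemma ReD (z w : C) : complex.Re (z + w) = complex.Re z + complex.Re w.
Proof. by case: z; case: w. Qed.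

Lemma Re_conj (z : C) : complex.Re (z^*) = complex.Re z.
Proof. by case: z. Qed.

Lemma Re_rc (r : R) : complex.Re (rc r) = r. Proof. by []. Qed.

Lemma normc_rc_sq (z : C) : rc (Normc.normc z ^+ 2) = z * z^*.
Proof. by rewrite -normCK rmorphXn. Qed.


Section Hil.
Variable X : hilbert R.
Implicit Types (x y z : X) (a : C).

Lemma hip0l z : hip X 0 z = 0.
Proof.
have := hip_linl 1 (0 : X) 0 z; rewrite scale1r addr0 mul1r => h.
by apply: (addrI (hip X 0 z)); rewrite addr0 -h.
Qed.

Lemma hipZDl a x y z : hip X (a *: x + y) z = a * hip X x z + hip X y z.
Proof. exact: hip_linl. Qed.

Lemma hipDl x y z : hip X (x + y) z = hip X x z + hip X y z.
Proof. by rewrite -{1}(scale1r x) hip_linl mul1r. Qed.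

Lemma hipZl a x z : hip X (a *: x) z = a * hip X x z.
Proof. by rewrite -(addr0 (a *: x)) hip_linl hip0l addr0. Qed.

Lemma hipNl x z : hip X (- x) z = - hip X x z.
Proof. by rewrite -scaleN1r hipZl mulN1r. Qed.

Lemma hipBl x y z : hip X (x - y) z = hip X x z - hip X y z.
Proof. by rewrite hipDl hipNl. Qed.

Lemma hip0r z : hip X z 0 = 0.
Proof. by rewrite hip_sym hip0l conjC0. Qed.

Lemma hipDr x y z : hip X z (x + y) = hip X z x + hip X z y.
Proof. by rewrite hip_sym hipDl rmorphD /= -!hip_sym. Qed.

Lemma hipZr a x z : hip X z (a *: x) = a^* * hip X z x.
Proof. by rewrite hip_sym hipZl rmorphM /= -hip_sym. Qed.

Lemma hipNr x z : hip X z (- x) = - hip X z x.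
Proof. by rewrite hip_sym hipNl rmorphN /= -hip_sym. Qed.

Lemma hipBr x y z : hip X z (x - y) = hip X z x - hip X z y.
Proof. by rewrite hipDr hipNr. Qed.

Definition nr x : R := complex.Re (hip X x x).

Lemma hip_rc x : hip X x x = rc (nr x).
Proof. exact/rc_real/hip_ge0. Qed.

Lemma nr_ge0 x : 0 <= nr x.
Proof. exact/rc_ge0/hip_ge0. Qed.

Lemma nr_eq0 x : nr x = 0 -> x = 0.
Proof. by move=> h; apply: hip_def; rewrite hip_rc h. Qed.

Lemma hip_conj_xx x : (hip X x x)^* = hip X x x.
Proof. by rewrite hip_rc conj_rc. Qed.

Lemma CS_C x y : `|hip X x y| ^+ 2 <= hip X x x * hip X y y.
Proof.
have [->|y0] := eqVneq y 0.
  by rewrite hip0r hip0l normr0 expr0n mulr0.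
have b0 : 0 < hip X y y.
  rewrite lt0r hip_ge0 andbT; apply/negP => /eqP/hip_def; exact/eqP.
set t := hip X x y / hip X y y.
have := hip_ge0 (x - t *: y).
rewrite hipBl !hipBr !hipZl !hipZr.
have -> : hip X y x = (hip X x y)^* by rewrite hip_sym.
have bn0 : hip X y y != 0 by rewrite gt_eqF.
rewrite /t (_ : (hip X x y / hip X y y)^* = (hip X x y)^* / hip X y y); last first.
  by rewrite rmorphM /= fmorphV /= hip_conj_xx.
rewrite normCK.
set a := hip X x y; set b := hip X y y; set c := hip X x x => h.
rewrite -subr_ge0.
have -> : c * b - a * a^* = (c - a^* / b * a - (a / b * a^* - a / b * (a^* / b * b))) * b.
  by field.
exact: mulr_ge0 h (ltW b0).
Qed.



Lemma CS_R x y : Normc.normc (hip X x y) ^+ 2 <= nr x * nr y.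
Proof.
have := CS_C x y; rewrite !hip_rc normCK -normc_rc_sq -rmorphM.
by rewrite lecR.
Qed.

Definition nm x : R := Num.sqrt (nr x).

Lemma nm_ge0 x : 0 <= nm x. Proof. exact: sqrtr_ge0. Qed.

Lemma nr_nm x : nr x = nm x ^+ 2.
Proof. by rewrite sqr_sqrtr // nr_ge0. Qed.

Lemma hnorm_nm x : hnorm x = rc (nm x).
Proof. by rewrite /hnorm hip_rc sqrtC_rc // nr_ge0. Qed.

Lemma CS x y : Normc.normc (hip X x y) <= nm x * nm y.
Proof.
have := CS_R x y; rewrite !nr_nm.
have := normc_ge0' (hip X x y); have := nm_ge0 x; have := nm_ge0 y.
set p := Normc.normc _; set u := nm x; set v := nm y => ? ? ? h.
have uv : 0 <= u * v by exact: mulr_ge0.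
nra.
Qed.

Lemma Re_hip_le x y : complex.Re (hip X x y) <= nm x * nm y.
Proof. exact: le_trans (Re_le_normc _) (CS x y). Qed.

Lemma nrD x y : nr (x + y) = nr x + nr y + 2 * complex.Re (hip X x y).
Proof.
rewrite /nr hipDl !hipDr (hip_sym x y) !ReD Re_conj; lra.
Qed.

Lemma nmD x y : nm (x + y) <= nm x + nm y.
Proof.
have h := nrD x y; have h2 := Re_hip_le x y; rewrite !nr_nm in h.
have := nm_ge0 x; have := nm_ge0 y; have := nm_ge0 (x + y).
set u := nm x in h h2 *; set v := nm y in h h2 *; set w := nm (x + y) in h *.
move=> ? ? ?; nra.
Qed.

Lemma nrZ a x : nr (a *: x) = Normc.normc a ^+ 2 * nr x.
Proof.
apply: (@complexI R); rewrite -hip_rc rmorphM /= normc_rc_sq -hip_rc.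
by rewrite hipZl hipZr mulrA [a * _]mulrC.
Qed.

Lemma nmZ a x : nm (a *: x) = Normc.normc a * nm x.
Proof.
by rewrite /nm nrZ sqrtrM ?sqr_ge0 // sqrtr_sqr ger0_norm // normc_ge0'.
Qed.

Lemma nmN x : nm (- x) = nm x.
Proof.
rewrite -scaleN1r nmZ (_ : Normc.normc (-1 : C) = 1) ?mul1r //.
by rewrite /= oppr0 expr0n addr0 sqrtr_sqr normrN normr1.
Qed.

Lemma nmB x y : nm (x - y) = nm (y - x).
Proof. by rewrite -nmN opprB. Qed.

Lemma nm_eq0 x : nm x = 0 -> x = 0.
Proof. by move=> h; apply: nr_eq0; rewrite nr_nm h expr0n. Qed.

Lemma nm0 : nm 0 = 0.
Proof. by rewrite /nm /nr hip0l /= sqrtr0. Qed.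

Lemma nmBD x y z : nm (x - z) <= nm (x - y) + nm (y - z).
Proof. by rewrite (_ : x - z = (x - y) + (y - z)) ?nmD // addrA addrNK. Qed.


Definition cv (u : nat -> X) (l : X) := forall e : R, 0 < e ->
  exists N, forall n, (N <= n)%N -> nm (u n - l) < e.
Definition cy (u : nat -> X) := forall e : R, 0 < e ->
  exists N, forall m n, (N <= m)%N -> (N <= n)%N -> nm (u m - u n) < e.

Lemma rc_sq_gt0 (e : R) : 0 < e -> 0 < rc (e ^+ 2) :> C.
Proof. by move=> e0; rewrite ltcR exprn_gt0. Qed.

Lemma nm_lt_sq x (e : R) : 0 < e -> (nm x < e) = (nr x < e ^+ 2).
Proof.
move=> e0; rewrite nr_nm ltr_pXn2r // ?nnegrE ?nm_ge0 //; exact: ltW.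
Qed.

Lemma hip_lt_C x (e : C) : 0 < e ->
  (hip X x x < e) = (nm x < Num.sqrt (complex.Re e)).
Proof.
move=> e0; have r0 := rc_gt0 e0.
rewrite nm_lt_sq ?sqrtr_gt0 // sqr_sqrtr ?(ltW r0) //.
by rewrite {1}(rc_real (ltW e0)) hip_rc ltcR.
Qed.

Lemma hip_lt_R x (e : R) : 0 < e -> (hip X x x < rc (e ^+ 2)) = (nm x < e).
Proof. by move=> e0; rewrite hip_rc ltcR nm_lt_sq. Qed.

Lemma cvE u l : converges_to (fun x => hip X x x) u l <-> cv u l.
Proof.
split=> h e e0.
  have [N hN] := h _ (rc_sq_gt0 e0); exists N => n /hN.
  by rewrite hip_lt_R.
have s0 : 0 < Num.sqrt (complex.Re e) by rewrite sqrtr_gt0 rc_gt0.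
have [N hN] := h _ s0; exists N => n /hN hn.
by rewrite hip_lt_C.
Qed.

Lemma cyE u : is_cauchy (fun x => hip X x x) u <-> cy u.
Proof.
split=> h e e0.
  have [N hN] := h _ (rc_sq_gt0 e0); exists N => m n hm hn.
  by have := hN _ _ hm hn; rewrite hip_lt_R.
have s0 : 0 < Num.sqrt (complex.Re e) by rewrite sqrtr_gt0 rc_gt0.
have [N hN] := h _ s0; exists N => m n hm hn.
by rewrite hip_lt_C // hN.
Qed.

Lemma complete u : cy u -> exists l, cv u l.
Proof. by move/cyE/hip_complete => [l /cvE]; exists l. Qed.

Lemma le0_small (r : R) : (forall e, 0 < e -> r <= e) -> r <= 0.
Proof.
move=> h; rewrite leNgt; apply/negP => r0.
have := h (r / 2) (divr_gt0 r0 (ltr0Sn _ _)). lra.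
Qed.

Lemma cv_unique u l l' : cv u l -> cv u l' -> l = l'.
Proof.
move=> h h'; apply/eqP; rewrite -subr_eq0; apply/eqP/nm_eq0/eqP.
rewrite eq_le nm_ge0 andbT; apply: le0_small => e e0.
have e2 : 0 < e / 2 by rewrite divr_gt0.
have [N hN] := h _ e2; have [N' hN'] := h' _ e2.
have := hN (maxn N N') (leq_maxl _ _); have := hN' (maxn N N') (leq_maxr _ _).
have := nmBD l (u (maxn N N')) l'; rewrite (nmB l (u _)); lra.
Qed.

Lemma cv_cy u l : cv u l -> cy u.
Proof.
move=> h e e0; have e2 : 0 < e / 2 by rewrite divr_gt0.
have [N hN] := h _ e2; exists N => m n /hN hm /hN hn.
have := nmBD (u m) l (u n); rewrite (nmB l); lra.
Qed.

Lemma cvZD (k : C) u w (p0 q0 : X) : cv u p0 -> cv w q0 ->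
  cv (fun n => k *: u n + w n) (k *: p0 + q0).
Proof.
move=> hu hw e e0.
have k0 : 0 < Normc.normc k + 1 by have := normc_ge0' k; lra.
have e2 : 0 < e / 2 / (Normc.normc k + 1) by rewrite !divr_gt0.
have e3 : 0 < e / 2 by rewrite divr_gt0.
have [N hN] := hu _ e2; have [N' hN'] := hw _ e3.
exists (maxn N N') => n hn.
have := hN n (leq_trans (leq_maxl _ _) hn); have := hN' n (leq_trans (leq_maxr _ _) hn).
have -> : k *: u n + w n - (k *: p0 + q0) = k *: (u n - p0) + (w n - q0).
  by rewrite scalerBr opprD !addrA; congr (_ + _); rewrite addrAC.
move=> h1 h2; apply: le_lt_trans (nmD _ _) _; rewrite nmZ.
have := nm_ge0 (u n - p0); have := normc_ge0' k.
move: h1 h2.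
set p := Normc.normc k; set q := nm (u n - p0); set r := nm (w n - q0).
move=> h1 h2 ? ?.
have : q * (p + 1) < e / 2 by rewrite -ltr_pdivlMr.
nra.
Qed.

Lemma cv_const_inv u l : (forall n, u n = l) -> cv u l.
Proof. by move=> h e e0; exists 0%N => n _; rewrite h subrr nm0. Qed.


Lemma normc_nat n : Normc.normc (n%:R : C) = n%:R.
Proof.
apply: (@complexI R).
have -> : rc (Normc.normc (n%:R : C)) = `|n%:R : C| by [].
by rewrite normr_nat rmorph_nat.
Qed.

Lemma eps_small (e : R) : 0 < e -> exists N, forall n, (N <= n)%N -> (n.+1%:R)^-1 < e.
Proof.
move=> e0; have [k hk] := ltr_add_invr e0; exists k => n kn.
rewrite add0r in hk; apply: le_lt_trans hk.
by rewrite lef_pV2 ?posrE ?ltr0Sn // ler_nat ltnS.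
Qed.

Lemma eps_gt0 n : 0 < (n.+1%:R : R)^-1.
Proof. by rewrite invr_gt0 ltr0Sn. Qed.

Lemma var_eq x0 w : w != 0 ->
  nr (x0 - (hip X x0 w / hip X w w) *: w) =
  nr x0 - Normc.normc (hip X x0 w) ^+ 2 / nr w.
Proof.
move=> w0.
have b0 : hip X w w != 0 by apply/negP => /eqP/hip_def; exact/eqP.
apply: (@complexI R); rewrite -hip_rc rmorphB rmorphM /= fmorphV /= normc_rc_sq -!hip_rc.
rewrite hipBl !hipBr !hipZl !hipZr.
rewrite (hip_sym x0 w) rmorphM /= fmorphV /= hip_conj_xx.
set p := hip X x0 w; set b := hip X w w; set c := hip X x0 x0.
by field.
Qed.

Lemma parallel x0 b : nr (x0 + b) + nr (x0 - b) = 2 * nr x0 + 2 * nr b.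
Proof.
rewrite !nrD hipNr (_ : nr (- b) = nr b); last by rewrite !nr_nm nmN.
rewrite (_ : complex.Re (- hip X x0 b) = - complex.Re (hip X x0 b)); last by case: (hip X x0 b).
lra.
Qed.

Lemma proj_full (Y : X -> Prop) :
  Y 0 -> (forall (k : C) x y, Y x -> Y y -> Y (k *: x + y)) ->
  (forall u l, (forall n, Y (u n)) -> cv u l -> Y l) ->
  (forall h, (forall y, Y y -> hip X h y = 0) -> h = 0) ->
  forall v, Y v.
Proof.
move=> Y0 Ylin Ycl Yperp v.
pose E : classical_sets.set R := fun r => exists y, Y y /\ r = nr (v - y).
have hinf : has_inf E.
  split; first by exists (nr (v - 0)); exists 0.
  by exists 0 => r [y [_ ->]]; exact: nr_ge0.
set d := inf E.
have dle : forall y, Y y -> d <= nr (v - y).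
  by move=> y Yy; apply: (ge_inf hinf.2); exists y.
have adh : forall n, exists y, Y y /\ nr (v - y) < d + (n.+1%:R)^-1.
  move=> n; have [r [y [Yy ->]] hr] := inf_adherent (eps_gt0 n) hinf.
  by exists y.
have [ys hys] := boolp.choice adh.
have Yh : forall n, Y (ys n) by move=> n; case: (hys n).
have cyc : cy ys.
  move=> e e0.
  have e4 : 0 < e ^+ 2 / 4 by rewrite divr_gt0 // exprn_gt0.
  have [N hN] := eps_small e4; exists N => m n hm hn.
  rewrite nm_lt_sq //.
  have := parallel (v - ys n) (v - ys m).
  have -> : v - ys n + (v - ys m) = 2%:R *: (v - ((2%:R^-1 : C) *: ys n + (2%:R^-1 : C) *: ys m)).
    rewrite scalerBr scalerDr !scalerA mulfV ?pnatr_eq0 // !scale1r scaler_nat.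
    by rewrite mulr2n opprD !addrA; congr (_ - _); rewrite addrAC.
  have -> : v - ys n - (v - ys m) = ys m - ys n.
    by rewrite opprB addrC addrA addrNK.
  rewrite nrZ.
  have -> : Normc.normc (2%:R : C) = 2.
    exact: normc_nat.
  have hmid := dle _ (Ylin (2%:R^-1) _ _ (Yh n) (Ylin (2%:R^-1) _ 0 (Yh m) Y0)).
  rewrite addr0 in hmid.
  have := hys n; have := hys m; have := hN _ hm; have := hN _ hn.
  move=> h1 h2 [_ h3] [_ h4].
  have : nr (ys m - ys n) = nr (ys n - ys m) by rewrite !nr_nm nmB.
  have -> : (2:R) ^+ 2 = 4 by rewrite expr2; lra.
  move=> hs hpar. set Q := nr (v - (_ + _)) in hmid hpar. move: (n.+1%:R^-1 : R) (m.+1%:R^-1 : R) h1 h2 h3 h4 => a1 a2 h1 h2 h3 h4. clearbody d. move: (e ^+ 2) h1 h2 => E2 h1 h2. lra.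
have [p hp] := complete cyc.
have Yp : Y p := Ycl _ _ Yh hp.
suff -> : v = p by [].
apply/eqP; rewrite -subr_eq0; apply/eqP/Yperp => w Yw.
have [->|w0] := eqVneq w 0; first by rewrite hip0r.
have nw0 : 0 < nr w.
  rewrite lt0r nr_ge0 andbT; apply/negP => /eqP h; move: w0; rewrite (nr_eq0 h) eqxx //.
apply: Normc.eq0_normc; apply/eqP; rewrite eq_le normc_ge0' andbT.
apply: le0_small => e e0.
have e2 : 0 < e / 2 by rewrite divr_gt0.
have [N1 hN1] := eps_small (divr_gt0 (exprn_gt0 2 e2) nw0).
have [N2 hN2] := hp _ (divr_gt0 e2 (ltr_wpDl (nm_ge0 w) ltr01)).
set n := maxn N1 N2.
have h1 := hN1 n (leq_maxl _ _); have h2 := hN2 n (leq_maxr _ _).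
have hv := dle _ (Ylin (hip X (v - ys n) w / hip X w w) _ _ Yw (Yh n)).
rewrite opprD addrA addrAC -[v - _ - _]/(v - ys n - _) var_eq // in hv.
have [_ hyn] := hys n.
set c := hip X (v - ys n) w in hv.
have hc : Normc.normc c < e / 2.
  have c0 := normc_ge0' c.
  have : Normc.normc c ^+ 2 / nr w < (e / 2) ^+ 2 / nr w.
    apply: lt_trans h1; move: (Normc.normc c ^+ 2 / nr w) hv => z hv; clearbody d; move: (n.+1%:R^-1 : R) hyn => a1 hyn; lra.
  rewrite ltr_pM2r ?invr_gt0 // => hsq.
  have := e2; nra.
have -> : v - p = (v - ys n) + (ys n - p) by rewrite addrA addrNK.
rewrite hipDl; apply: le_trans (le_normcD _ _) _.
have := CS (ys n - p) w; have := nm_ge0 (ys n - p); have := nm_ge0 w.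
move: h2; set q := nm (ys n - p); set r := nm w => h2 ? ? hCS.
have : q * (r + 1) < e / 2 by rewrite -ltr_pdivlMr // ltr_wpDl // ltr01.
nra.
Qed.



Lemma normc_rc (r : R) : Normc.normc (rc r) = `|r|.
Proof. by rewrite /= expr0n addr0 sqrtr_sqr. Qed.

Lemma normc_hip_self x : Normc.normc (hip X x x) = nm x ^+ 2.
Proof. by rewrite hip_rc normc_rc ger0_norm ?nr_ge0 // nr_nm. Qed.

Lemma bound_diff w (c : R) : 0 <= c ->
  (forall y, Normc.normc (hip X w y) <= c * nm y) -> nm w <= c.
Proof.
move=> c0 h; have := h w; rewrite normc_hip_self.
have := nm_ge0 w; nra.
Qed.

Lemma uniq_l w w' : (forall y, hip X w y = hip X w' y) -> w = w'.
Proof.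
move=> h; apply/eqP; rewrite -subr_eq0; apply/eqP/hip_def.
by rewrite hipBl h subrr.
Qed.

Lemma uniq_r w w' : (forall y, hip X y w = hip X y w') -> w = w'.
Proof.
move=> h; apply/eqP; rewrite -subr_eq0; apply/eqP/hip_def.
by rewrite hipBr h subrr.
Qed.

Lemma normc_small (z : C) : (forall e : R, 0 < e -> Normc.normc z <= e) -> z = 0.
Proof.
move=> h; apply: Normc.eq0_normc; apply/eqP; rewrite eq_le normc_ge0' andbT.
exact: le0_small.
Qed.

Lemma weak_strong (f : X -> C) (ws : nat -> X) (eps : nat -> R) :
  (forall k y, Normc.normc (hip X (ws k) y - f y) <= eps k * nm y) ->
  (forall e, 0 < e -> exists N, forall k, (N <= k)%N -> eps k < e) ->
  exists w, forall y, hip X w y = f y.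
Proof.
move=> hw he.
have cyw : cy ws.
  move=> e e0; have e2 : 0 < e / 2 by rewrite divr_gt0.
  have [N hN] := he _ e2; exists N => j k hj hk.
  set d := ws j - ws k.
  have hd : Normc.normc (hip X d d) <= (eps j + eps k) * nm d.
    have -> : hip X d d = (hip X (ws j) d - f d) - (hip X (ws k) d - f d).
      by rewrite /d hipBl opprB addrA addrNK.
    apply: le_trans (le_normcD _ _) _; rewrite normcN mulrDl.
    exact: lerD.
  rewrite normc_hip_self in hd.
  have := hN _ hj; have := hN _ hk; have := nm_ge0 d.
  move: hd; move: (nm d) (eps j) (eps k) => a b c hd ? ? ?.
  nra.
have [w hw'] := complete cyw.
exists w => y; apply/eqP; rewrite -subr_eq0; apply/eqP/normc_small => e e0.
have ny0 := nm_ge0 y.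
have dl : 0 < e / 2 / (nm y + 1) by rewrite !divr_gt0 // ltr_wpDl.
have [N1 h1] := he _ dl; have [N2 h2] := hw' _ dl.
set k := maxn N1 N2.
have hk1 := h1 k (leq_maxl _ _); have hk2 := h2 k (leq_maxr _ _).
have -> : hip X w y - f y = hip X (w - ws k) y + (hip X (ws k) y - f y).
  by rewrite hipBl addrA addrNK.
apply: le_trans (le_normcD _ _) _.
have := CS (w - ws k) y; rewrite nmB => hcs.
have := hw k y.
have : e / 2 / (nm y + 1) * (nm y + 1) = e / 2 by rewrite divfK // gt_eqF // ltr_wpDl.
have a0 := nm_ge0 (ws k - w).
move: hcs hk1 hk2 dl a0 ny0; move: (e / 2 / (nm y + 1)) (nm (ws k - w)) (eps k) (nm y) => q a b c.
move=> hcs hk1 hk2 dl a0 c0 hq hwk.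
nra.
Qed.


End Hil.
End Basics.

Section Lim.
Variable R : realType.
Local Notation C := R[i].
Local Notation rc x := ((x)%:C)%C.

Lemma limit_gen (H X Y : hilbert R) (phi : C -> Y -> H) (psi : X -> H)
  (ws : C -> Y -> X) (target : Y -> X) (c0 : C) (K L d0 : R) :
  0 < d0 -> 0 <= K -> 0 <= L ->
  (forall y', nm (psi y') <= K * nm y') ->
  (forall n y, Normc.normc (n - c0) < d0 ->
     nm (phi c0 y - phi n y) <= L * Normc.normc (n - c0) * nm y) ->
  (forall n y y', Normc.normc (n - c0) < d0 -> n != c0 ->
     hip X (ws n y) y' = hip H (phi n y) (psi y')) ->
  (forall y, (exists w, forall y', hip X w y' = hip H (phi c0 y) (psi y')) ->
     forall y', hip X (target y) y' = hip H (phi c0 y) (psi y')) ->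
  forall e : C, 0 < e -> exists d : C, 0 < d /\ forall n, n != c0 ->
    `|n - c0| < d -> forall y, hnorm (target y - ws n y) <= e * hnorm y.
Proof.
move=> d00 K0 L0 hpsi hphi hws htg e e0.
have bnd : forall n y y', Normc.normc (n - c0) < d0 ->
    Normc.normc (hip H (phi c0 y - phi n y) (psi y')) <=
    L * Normc.normc (n - c0) * nm y * K * nm y'.
  move=> n y y' hn; apply: le_trans (CS _ _) _.
  rewrite -[_ * K * _]mulrA; apply: ler_pM; [exact: nm_ge0|exact: nm_ge0|exact: hphi|exact: hpsi].
have tspec : forall y y', hip X (target y) y' = hip H (phi c0 y) (psi y').
  move=> y; apply: htg.
  pose r k := d0 / 2 * (k.+1%:R : R)^-1.
  have r0 : forall k, 0 < r k by move=> k; rewrite /r mulr_gt0 ?divr_gt0 ?eps_gt0.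
  have rd : forall k, r k < d0.
    move=> k; rewrite /r; have h1 : (k.+1%:R : R)^-1 <= 1.
      by rewrite invf_le1 ?ltr0Sn // ler1n.
    have h2 := @eps_gt0 R k.
    move: (k.+1%:R : R)^-1 h1 h2 => t h1 h2; nra.
  pose nk k := c0 + rc (r k).
  have hnk : forall k, Normc.normc (nk k - c0) = r k.
    by move=> k; rewrite /nk addrC addKr normc_rc ger0_norm // ltW.
  have nk_ne : forall k, nk k != c0.
    move=> k; apply/negP => /eqP h; have := hnk k; rewrite h subrr.
    rewrite (_ : Normc.normc 0 = 0) ?(Normc.normc0) //; move: (r0 k); lra.
  apply: (@weak_strong _ _ _ (fun k => ws (nk k) y)
    (fun k => L * r k * nm y * K)).
    move=> k y'; rewrite hws ?hnk // -hipBl.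
    rewrite (_ : hip H (phi (nk k) y - phi c0 y) (psi y') =
      - hip H (phi c0 y - phi (nk k) y) (psi y')); last by rewrite -hipNl opprB.
    rewrite normcN; apply: le_trans (bnd _ _ _ _) _; rewrite hnk //.
  move=> e' e'0.
  set A := L * (d0 / 2) * nm y * K.
  have A0 : 0 <= A by rewrite /A !mulr_ge0 ?nm_ge0 // ?(ltW d00) // invr_ge0 ler0n.
  have [N hN] := eps_small (divr_gt0 e'0 (ltr_wpDl A0 ltr01)).
  exists N => k hk; have := hN _ hk.
  rewrite (_ : L * r k * nm y * K = A * (k.+1%:R)^-1); last by rewrite /A /r; ring.
  rewrite ltr_pdivlMr ?ltr_wpDl //.
  have := @eps_gt0 R k; move: ((k.+1%:R : R)^-1) => t t0 ht; nra.
have E0 := rc_gt0 e0; set E := complex.Re e in E0.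
have LK0 : 0 < L * K + 1 by rewrite ltr_wpDl ?mulr_ge0.
exists (rc (Num.min d0 (E / (L * K + 1)))); split.
  by rewrite ltcR lt_min d00 divr_gt0.
move=> n hn hd y.
have hd' : Normc.normc (n - c0) < Num.min d0 (E / (L * K + 1)) by rewrite -ltcR.
move: hd'; rewrite lt_min => /andP[hd1 hd2].
have hb : nm (target y - ws n y) <= L * Normc.normc (n - c0) * nm y * K.
  apply: bound_diff; first by rewrite !mulr_ge0 ?nm_ge0 ?normc_ge0'.
  move=> y'; rewrite hipBl tspec hws // -hipBl; exact: bnd.
rewrite !hnorm_nm (rc_real (ltW e0)) -/E -rmorphM lecR.
apply: le_trans hb _.
move: hd2; rewrite ltr_pdivlMr // => hd2.
have := normc_ge0' (n - c0); have := nm_ge0 y; have : 0 <= L * K by rewrite mulr_ge0.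
rewrite (_ : L * Normc.normc (n - c0) * nm y * K = (L * K) * Normc.normc (n - c0) * nm y); last by ring.
move: (Normc.normc (n - c0)) (nm y) (L * K) hd2 => a b c hd2 ? ? ?.
nra.
Qed.

End Lim.

Arguments cv {R X}.
Arguments cy {R X}.

Section Side.
Variable R : realType.
Local Notation C := R[i].
Local Notation rc x := ((x)%:C)%C.
Variables (H X1 X2 : hilbert R) (V : H * H -> Prop) (G1 : H * H -> X1)
  (G2 : H * H -> X2) (M : C).
Hypothesis Vlin : forall (k : C) a b, V a -> V b -> V (k *: a.1 + b.1, k *: a.2 + b.2).
Hypothesis Glin : forall (k : C) a b, V a -> V b ->
  G1 (k *: a.1 + b.1, k *: a.2 + b.2) = k *: G1 a + G1 b /\
  G2 (k *: a.1 + b.1, k *: a.2 + b.2) = k *: G2 a + G2 b.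
Hypothesis V0 : V (0, 0).
Hypothesis Vcl : forall (u : nat -> H * H) x1 x2, (forall n, V (u n)) ->
  cv (fun n => (u n).1) x1 -> cv (fun n => (u n).2) x2 -> V (x1, x2).
Hypothesis Gbd : forall a, V a ->
  hip X1 (G1 a) (G1 a) + hip X2 (G2 a) (G2 a) <= M * (hip H a.1 a.1 + hip H a.2 a.2).
Hypothesis Gsurj : forall y1 y2, exists a, V a /\ G1 a = y1 /\ G2 a = y2.
Hypothesis Green : forall a b, V a -> V b ->
  hip H a.1 b.1 - hip H a.2 b.2 = hip X1 (G1 a) (G1 b) - hip X2 (G2 a) (G2 b).
Hypothesis Vmax : forall e, (forall c, V c -> G1 c = 0 ->
  hip H e.1 c.1 - hip H e.2 c.2 = 0) -> V e.

Lemma Vsub a b : V a -> V b -> V (a.1 - b.1, a.2 - b.2).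
Proof.
move=> ha hb; have := Vlin (-1) hb ha; rewrite !scaleN1r.
by rewrite [- _ + a.1]addrC [- _ + a.2]addrC.
Qed.

Lemma Gsub a b : V a -> V b -> G1 (a.1 - b.1, a.2 - b.2) = G1 a - G1 b /\
  G2 (a.1 - b.1, a.2 - b.2) = G2 a - G2 b.
Proof.
move=> ha hb; have := Glin (-1) hb ha; rewrite !scaleN1r.
by rewrite [- _ + a.1]addrC [- _ + a.2]addrC [- G1 b + _]addrC [- G2 b + _]addrC.
Qed.

Lemma G10 : G1 (0, 0) = 0.
Proof. by have [h _] := Gsub V0 V0; rewrite subrr in h; rewrite h subrr. Qed.

Lemma Green_self a : V a -> nr a.1 - nr a.2 = nr (G1 a) - nr (G2 a).
Proof.
move=> ha; apply: (@complexI R); rewrite !rmorphB /= -!hip_rc.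
exact: Green.
Qed.

Lemma lec_Re (z w : C) : z <= w -> complex.Re z <= complex.Re w.
Proof. by rewrite lecE => /andP[]. Qed.

Lemma Re_mul_rc (z : C) (r : R) : complex.Re (z * rc r) = complex.Re z * r.
Proof. by case: z => x y /=; rewrite mulr0 subr0. Qed.

Lemma Gbd_R a : V a -> nr (G1 a) <= (`|complex.Re M| + 1) * (nr a.1 + nr a.2).
Proof.
move=> ha; have := lec_Re (Gbd ha); rewrite !hip_rc -!rmorphD /=.
have := nr_ge0 (G2 a); have := nr_ge0 a.1; have := nr_ge0 a.2.
have := ler_norm (complex.Re M); have := normr_ge0 (complex.Re M).
rewrite Re_mul_rc.
move: (complex.Re M) `|complex.Re M| => m1 am.
move=> ? ? ? ? ? h. nra.
Qed.


Lemma nr_B (X : hilbert R) (x y : X) : nr (x - y) = nr (y - x).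
Proof. by rewrite !nr_nm nmB. Qed.

Lemma cont1 (u : nat -> H * H) x : (forall n, V (u n)) -> V x ->
  cv (fun n => (u n).1) x.1 -> cv (fun n => (u n).2) x.2 ->
  (forall n, G1 (u n) = 0) -> G1 x = 0.
Proof.
move=> Vu Vx c1 c2 G0.
apply: nr_eq0; apply/eqP; rewrite eq_le nr_ge0 andbT; apply: le0_small => e e0.
set K := `|complex.Re M| + 1.
have K0 : 0 < K by rewrite /K ltr_wpDl.
have eK : 0 < e / (2 * K) by rewrite divr_gt0 // mulr_gt0.
have d0 : 0 < Num.sqrt (e / (2 * K)) by rewrite sqrtr_gt0.
have [N1 h1] := c1 _ d0; have [N2 h2] := c2 _ d0.
set n := maxn N1 N2.
have := h1 n (leq_maxl _ _); have := h2 n (leq_maxr _ _).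
rewrite !nm_lt_sq // sqr_sqrtr ?(ltW eK) // => hb ha.
have hd := Gbd_R (Vsub Vx (Vu n)).
rewrite (proj1 (Gsub Vx (Vu n))) G0 subr0 /= in hd.
rewrite (nr_B x.1) (nr_B x.2) -/K in hd.
have : K * (nr ((u n).1 - x.1) + nr ((u n).2 - x.2)) <= K * (e / (2 * K) + e / (2 * K)).
  by rewrite ler_pM2l //; apply: lerD; apply: ltW.
have -> : K * (e / (2 * K) + e / (2 * K)) = e by field; rewrite gt_eqF.
move=> h; exact: le_trans hd h.
Qed.

Lemma Green_G1 a : V a -> G1 a = 0 -> nm a.1 <= nm a.2.
Proof.
move=> ha g0; have := Green_self ha; rewrite g0 /nr hip0l /= => h.
have := nr_ge0 (G2 a); rewrite -/(nr a.1) -/(nr a.2) in h.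
rewrite !nr_nm in h => h2.
have := nm_ge0 a.1; have := nm_ge0 a.2; nra.
Qed.


Lemma lin3 (X : lmodType C) (l : C) (x1 x2 y1 y2 : X) :
  (x2 - y2) - l *: (x1 - y1) = (x2 - l *: x1) - (y2 - l *: y1).
Proof.
rewrite scalerBr; move: (l *: x1) (l *: y1) => a b.
by rewrite !opprB !addrA -[x2 - a + b]addrAC -[x2 - y2 + b]addrAC addrAC.
Qed.

Lemma lin2 (X : lmodType C) (k l : C) (x1 x2 y1 y2 : X) :
  k *: (x2 - l *: x1) + (y2 - l *: y1) = (k *: x2 + y2) - l *: (k *: x1 + y1).
Proof.
rewrite !scalerBr scalerDr !scalerA [k * l]mulrC.
move: (k *: x2) ((l * k) *: x1) (l *: y1) => a b c.
by rewrite opprD !addrA -[a - b + y2]addrAC.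
Qed.

Lemma normc_conj (z : C) : Normc.normc (z^*) = Normc.normc z.
Proof. by case: z => x y /=; rewrite sqrrN. Qed.

Lemma exist1 (l : C) : Normc.normc l < 1 ->
  forall z, exists a, V a /\ a.2 = l *: a.1 /\ G1 a = z.
Proof.
move=> l1.
have l0 := normc_ge0' l.
pose Y v := exists c, V c /\ G1 c = 0 /\ v = c.2 - l *: c.1.
have hY : forall v, Y v.
  apply: proj_full.
  - by exists (0,0); split; [exact V0| split; [exact G10| by rewrite scaler0 subr0]].
  - move=> k x y [c [Vc [Gc ->]]] [c' [Vc' [Gc' ->]]].
    exists (k *: c.1 + c'.1, k *: c.2 + c'.2); split; first exact: Vlin.
    split; first by rewrite (proj1 (Glin k Vc Vc')) Gc Gc' scaler0 addr0.
    exact: lin2.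
  - move=> u v0 Yu cvu.
    have [cs hcs] := boolp.choice Yu.
    have Vcs : forall n, V (cs n) by move=> n; case: (hcs n).
    have Gcs : forall n, G1 (cs n) = 0 by move=> n; case: (hcs n) => _ [].
    have ucs : forall n, u n = (cs n).2 - l *: (cs n).1 by move=> n; case: (hcs n) => _ [].
    have key : forall m n, nm ((cs m).1 - (cs n).1) <= nm ((cs m).2 - (cs n).2) /\
        nm ((cs m).2 - (cs n).2) * (1 - Normc.normc l) <= nm (u m - u n).
      move=> m n; have Vd := Vsub (Vcs m) (Vcs n).
      have Gd : G1 ((cs m).1 - (cs n).1, (cs m).2 - (cs n).2) = 0.
        by rewrite (proj1 (Gsub (Vcs m) (Vcs n))) !Gcs subrr.
      have h1 := Green_G1 Vd Gd; split => //=.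
      rewrite !ucs -lin3.
      set d1 := (cs m).1 - (cs n).1 in h1 *; set d2 := (cs m).2 - (cs n).2 in h1 *.
      have := nmD (d2 - l *: d1) (l *: d1); rewrite addrNK nmZ.
      have := nm_ge0 d1; have := nm_ge0 d2; nra.
    have cy2 : cy (fun n => (cs n).2).
      move=> e e0; have e1 : 0 < e * (1 - Normc.normc l) by rewrite mulr_gt0 // subr_gt0.
      have [N hN] := cv_cy cvu e1; exists N => m n hm hn.
      have [_ h] := key m n; have h' := hN _ _ hm hn.
      have := le_lt_trans h h'; by rewrite ltr_pM2r ?subr_gt0.
    have cy1 : cy (fun n => (cs n).1).
      move=> e e0; have [N hN] := cy2 _ e0; exists N => m n hm hn.
      exact: le_lt_trans (proj1 (key m n)) (hN _ _ hm hn).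
    have [x1 hx1] := complete cy1; have [x2 hx2] := complete cy2.
    have Vx : V (x1, x2) := Vcl Vcs hx1 hx2.
    exists (x1, x2); split => //; split; first exact: (cont1 Vcs Vx hx1 hx2 Gcs).
    have : cv (fun n => (- l) *: (cs n).1 + (cs n).2) ((- l) *: x1 + x2) := cvZD (- l) hx1 hx2.
    have -> : (fun n => (- l) *: (cs n).1 + (cs n).2) = u.
      by apply: boolp.funext => n; rewrite ucs scaleNr addrC.
    move/(cv_unique cvu) => ->; by rewrite scaleNr addrC.
  - move=> h hperp.
    set e := (l^* *: h, h).
    have ke : forall c, V c -> G1 c = 0 -> hip H e.1 c.1 - hip H e.2 c.2 = 0.
      move=> c Vc Gc; have := hperp _ (ex_intro _ c (conj Vc (conj Gc erefl))).
      rewrite hipBr hipZr /= hipZl => hh.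
      by rewrite -[LHS]opprK opprB hh oppr0.
    have Ve := Vmax ke.
    have [c [Vc [Gc1 Gc2]]] := Gsurj 0 (G2 e).
    have g := Green Ve Vc; rewrite ke // Gc1 Gc2 hip0r sub0r in g.
    have hz : hip X2 (G2 e) (G2 e) = 0 by apply/eqP; rewrite -oppr_eq0 -g.
    have G2e : nr (G2 e) = 0 by rewrite /nr hz.
    have := Green_self Ve; rewrite G2e subr0 /= nrZ normc_conj => h2.
    have := nr_ge0 (G1 e); have := nr_ge0 h.
    rewrite -h2 => hh0 hg.
    have hl2 : Normc.normc l ^+ 2 < 1 by rewrite expr2; nra.
    apply: nr_eq0; nra.
move=> z.
have [b [Vb [Gb1 _]]] := Gsurj z 0.
have [c [Vc [Gc hc]]] := hY (b.2 - l *: b.1).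
exists (b.1 - c.1, b.2 - c.2); split; first exact: Vsub.
split; last by rewrite (proj1 (Gsub Vb Vc)) Gb1 Gc subr0.
apply/eqP; rewrite -subr_eq0 /= lin3 hc subrr //.
Qed.


Lemma bound1 l a : V a -> a.2 = l *: a.1 ->
  nm a.1 ^+ 2 * (1 - Normc.normc l ^+ 2) <= nm (G1 a) ^+ 2.
Proof.
move=> Va ha; have := Green_self Va; rewrite ha nrZ !nr_nm.
have := nm_ge0 (G2 a); move: (Normc.normc l) => p h1 h2.
nra.
Qed.

Lemma boundK l a : Normc.normc l < 1 -> V a -> a.2 = l *: a.1 ->
  nm a.1 * (1 - Normc.normc l) <= nm (G1 a).
Proof.
move=> l1 Va ha; have := bound1 Va ha.
have := normc_ge0' l; have := nm_ge0 a.1; have := nm_ge0 (G1 a).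
move: (Normc.normc l) l1 => p l1 h1 h2 h3 h.
have hp : 0 <= 1 - p by lra.
have : (nm a.1 * (1 - p)) ^+ 2 <= nm (G1 a) ^+ 2.
  apply: le_trans h; rewrite exprMn ler_wpM2l ?sqr_ge0 //; nra.
rewrite ler_pXn2r // ?nnegrE //; exact: mulr_ge0.
Qed.

Lemma lip0 l n a b : V a -> a.2 = l *: a.1 -> V b -> b.2 = n *: b.1 ->
  G1 a = G1 b ->
  (1 - Normc.normc l) * nm (a.1 - b.1) <= Normc.normc (l - n) * nm b.1.
Proof.
move=> Va ha Vb hb hab.
have Vd := Vsub Va Vb.
have Gd : G1 (a.1 - b.1, a.2 - b.2) = 0 by rewrite (proj1 (Gsub Va Vb)) hab subrr.
have h1 := Green_G1 Vd Gd; rewrite /= ha hb in h1.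
rewrite (_ : l *: a.1 - n *: b.1 = l *: (a.1 - b.1) + (l - n) *: b.1) in h1; last first.
  by rewrite scalerBr scalerBl addrA addrNK.
have := nmD (l *: (a.1 - b.1)) ((l - n) *: b.1); rewrite !nmZ.
have := nm_ge0 (a.1 - b.1); nra.
Qed.

Lemma lipL l n y a b : Normc.normc l < 1 ->
  Normc.normc (n - l) < (1 - Normc.normc l) / 2 ->
  V a -> a.2 = l *: a.1 -> G1 a = y -> V b -> b.2 = n *: b.1 -> G1 b = y ->
  nm (a.1 - b.1) <= 2 / (1 - Normc.normc l) ^+ 2 * Normc.normc (n - l) * nm y.
Proof.
move=> l1 nl Va ha Ga Vb hb Gb.
have hlip := lip0 Va ha Vb hb (etrans Ga (esym Gb)).
have hn : Normc.normc n < (1 + Normc.normc l) / 2.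
  have := le_normcD (n - l) l; rewrite addrNK; lra.
have n1 : Normc.normc n < 1 by lra.
have hbK := boundK n1 Vb hb; rewrite Gb in hbK.
rewrite (_ : Normc.normc (l - n) = Normc.normc (n - l)) in hlip; last first.
  by rewrite -opprB normcN.
have l0 := normc_ge0' l; have q0 := normc_ge0' (n - l).
have nb0 := nm_ge0 b.1; have nd0 := nm_ge0 (a.1 - b.1); have ny0 := nm_ge0 y.
move: hlip hbK hn nl l1 l0 q0 nb0 nd0 ny0.
move: (Normc.normc l) (Normc.normc n) (Normc.normc (n - l)) (nm b.1) (nm (a.1 - b.1)) (nm y).
move=> p pn q nb nd ny hlip hbK hn nl l1 l0 q0 nb0 nd0 ny0.
have t0 : 0 < 1 - p by lra.
have hb2 : nb * (1 - p) <= 2 * ny by nra.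
have h3 : nd * (1 - p) ^+ 2 <= 2 * q * ny.
  rewrite expr2 mulrA.
  have : nd * (1 - p) * (1 - p) <= q * nb * (1 - p) by rewrite ler_pM2r // mulrC.
  nra.
have -> : 2 / (1 - p) ^+ 2 * q * ny = 2 * q * ny / (1 - p) ^+ 2.
  by ring.
by rewrite ler_pdivlMr // exprn_gt0.
Qed.

End Side.

Section Main.
Variable R : realType.
Local Notation C := R[i].
Local Notation rc x := ((x)%:C)%C.
Variables (H : hilbert R) (T : H -> H) (Hp Hm : hilbert R)
  (Gp : H * H -> Hp) (Gm : H * H -> Hm).
Hypothesis hBQ : boundary_quadruple T Gp Gm.

Local Notation V := (ATperp T).

Lemma kform_lin (k : C) (a b c : H * H) :
  kform (k *: a.1 + b.1, k *: a.2 + b.2) c = k * kform a c + kform b c.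
Proof. rewrite /kform /= !hipZDl; ring. Qed.

Lemma Vlin_p (k : C) a b : V a -> V b -> V (k *: a.1 + b.1, k *: a.2 + b.2).
Proof. by move=> ha hb c hc; rewrite kform_lin ha // hb // mulr0 addr0. Qed.

Lemma Glin_p (k : C) a b : V a -> V b ->
  Gp (k *: a.1 + b.1, k *: a.2 + b.2) = k *: Gp a + Gp b /\
  Gm (k *: a.1 + b.1, k *: a.2 + b.2) = k *: Gm a + Gm b.
Proof. by case: hBQ => GL _; exact: GL. Qed.

Lemma V0_p : V (0, 0).
Proof. by move=> b _; rewrite /kform /= !hip0l mulr0 subr0. Qed.

Lemma i_neq0 : ('i : C) != 0. Proof. exact: neq0Ci. Qed.

Lemma Vperp e : (forall b, AT T b -> hip H e.1 b.1 - hip H e.2 b.2 = 0) -> V e.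
Proof. by move=> h b hb; rewrite /kform -mulrBr h // mulr0. Qed.

Lemma Vhip a b : V a -> AT T b -> hip H a.1 b.1 - hip H a.2 b.2 = 0.
Proof.
move=> ha hb; have := ha b hb; rewrite /kform -mulrBr => /eqP.
by rewrite mulf_eq0 (negbTE i_neq0) => /eqP.
Qed.

Lemma AT_props b : AT T b -> V b /\ Gp b = 0 /\ Gm b = 0.
Proof. by case: hBQ => _ [_ [_ [GK _]]] /GK. Qed.

Lemma Green_p a b : V a -> V b ->
  hip H a.1 b.1 - hip H a.2 b.2 = hip Hp (Gp a) (Gp b) - hip Hm (Gm a) (Gm b).
Proof.
case: hBQ => _ [_ [_ [_ GG]]] ha hb.
have := GG a b ha hb; rewrite /kform -!mulrBr; exact: (mulfI i_neq0).
Qed.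

Lemma Gsurj_p y1 y2 : exists a, V a /\ Gp a = y1 /\ Gm a = y2.
Proof. by case: hBQ => _ [_ [GS _]]; exact: GS. Qed.

Lemma Vcl_p (u : nat -> H * H) x1 x2 : (forall n, V (u n)) ->
  cv (fun n => (u n).1) x1 -> cv (fun n => (u n).2) x2 -> V (x1, x2).
Proof.
move=> Vu c1 c2; apply: Vperp => b hb /=.
apply: normc_small => e e0.
have hb0 : 0 < nm b.1 + nm b.2 + 1 by rewrite ltr_wpDl ?addr_ge0 ?nm_ge0.
have dl : 0 < e / 2 / (nm b.1 + nm b.2 + 1) by rewrite !divr_gt0.
have [N1 h1] := c1 _ dl; have [N2 h2] := c2 _ dl.
set n := maxn N1 N2.
have hn1 := h1 n (leq_maxl _ _); have hn2 := h2 n (leq_maxr _ _).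
have -> : hip H x1 b.1 - hip H x2 b.2 =
  (hip H (x1 - (u n).1) b.1 - hip H (x2 - (u n).2) b.2) +
  (hip H (u n).1 b.1 - hip H (u n).2 b.2).
  rewrite !hipBl; set p := hip H x1 b.1; set q := hip H x2 b.2.
  set r := hip H (u n).1 b.1; set s := hip H (u n).2 b.2; ring.
rewrite (Vhip (Vu n) hb) addr0.
apply: le_trans (le_normcD _ _) _; rewrite normcN.
have := CS (x1 - (u n).1) b.1; have := CS (x2 - (u n).2) b.2.
rewrite !(nmB _ (u n).1) !(nmB _ (u n).2).
have : e / 2 / (nm b.1 + nm b.2 + 1) * (nm b.1 + nm b.2 + 1) = e / 2.
  by rewrite divfK // gt_eqF.
have := nm_ge0 b.1; have := nm_ge0 b.2; have := nm_ge0 ((u n).1 - x1);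
have := nm_ge0 ((u n).2 - x2).
move: hn1 hn2 dl; move: (e / 2 / (nm b.1 + nm b.2 + 1)) (nm b.1) (nm b.2)
  (nm ((u n).1 - x1)) (nm ((u n).2 - x2)) => q a1 a2 z1 z2.
move=> hn1 hn2 dl ? ? ? ? hq hc2 hc1.
nra.
Qed.

Lemma Vmax_p e : (forall c, V c -> Gp c = 0 -> hip H e.1 c.1 - hip H e.2 c.2 = 0) -> V e.
Proof.
move=> h; apply: Vperp => b hb; have [Vb [Gb _]] := AT_props hb; exact: h.
Qed.


Lemma Gbd_ex : exists M : C, forall a, V a ->
  hip Hp (Gp a) (Gp a) + hip Hm (Gm a) (Gm a) <= M * (hip H a.1 a.1 + hip H a.2 a.2).
Proof. by case: hBQ => _ [GB _]. Qed.

Definition Vm (a : H * H) := V (a.2, a.1).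
Definition G1m (a : H * H) := Gm (a.2, a.1).
Definition G2m (a : H * H) := Gp (a.2, a.1).

Lemma Vlin_m (k : C) a b : Vm a -> Vm b -> Vm (k *: a.1 + b.1, k *: a.2 + b.2).
Proof. move=> ha hb; exact: (Vlin_p k ha hb). Qed.

Lemma Glin_m (k : C) a b : Vm a -> Vm b ->
  G1m (k *: a.1 + b.1, k *: a.2 + b.2) = k *: G1m a + G1m b /\
  G2m (k *: a.1 + b.1, k *: a.2 + b.2) = k *: G2m a + G2m b.
Proof. by move=> ha hb; have [h1 h2] := Glin_p k ha hb; split. Qed.

Lemma V0_m : Vm (0, 0). Proof. exact: V0_p. Qed.

Lemma Vcl_m (u : nat -> H * H) x1 x2 : (forall n, Vm (u n)) ->
  cv (fun n => (u n).1) x1 -> cv (fun n => (u n).2) x2 -> Vm (x1, x2).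
Proof. move=> Vu c1 c2; exact: (@Vcl_p (fun n => ((u n).2, (u n).1)) x2 x1 Vu c2 c1). Qed.

Lemma Gbd_m (M : C) : (forall a, V a ->
  hip Hp (Gp a) (Gp a) + hip Hm (Gm a) (Gm a) <= M * (hip H a.1 a.1 + hip H a.2 a.2)) ->
  forall a, Vm a ->
  hip Hm (G1m a) (G1m a) + hip Hp (G2m a) (G2m a) <= M * (hip H a.1 a.1 + hip H a.2 a.2).
Proof.
move=> hM a ha; have := hM _ ha; rewrite /G1m /G2m /=.
by rewrite addrC [hip H a.2 _ + _]addrC.
Qed.

Lemma Gsurj_m y1 y2 : exists a, Vm a /\ G1m a = y1 /\ G2m a = y2.
Proof.
have [[a1 a2] [Va [h1 h2]]] := Gsurj_p y2 y1.
by exists (a2, a1).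
Qed.

Lemma Green_m a b : Vm a -> Vm b ->
  hip H a.1 b.1 - hip H a.2 b.2 = hip Hm (G1m a) (G1m b) - hip Hp (G2m a) (G2m b).
Proof.
move=> ha hb; have := Green_p ha hb; rewrite /G1m /G2m /= => h.
by rewrite -[LHS]opprB h opprB.
Qed.

Lemma Vmax_m e : (forall c, Vm c -> G1m c = 0 ->
  hip H e.1 c.1 - hip H e.2 c.2 = 0) -> Vm e.
Proof.
move=> h; apply: Vperp => -[b1 b2] hb /=.
have [Vb [_ Gb]] := AT_props hb.
have := h (b2, b1) Vb Gb; rewrite /= => h'.
by rewrite -[LHS]opprB h' oppr0.
Qed.

Lemma ex_plus l : Normc.normc l < 1 ->
  forall z, exists a, V a /\ a.2 = l *: a.1 /\ Gp a = z.
Proof.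
have [M hM] := Gbd_ex.
exact: (exist1 Vlin_p Glin_p V0_p Vcl_p hM Gsurj_p Green_p Vmax_p).
Qed.

Lemma ex_minus l : Normc.normc l < 1 ->
  forall y, exists a, V a /\ a.1 = l *: a.2 /\ Gm a = y.
Proof.
move=> hl y; have [M hM] := Gbd_ex.
have [a [Va [ha Ga]]] := @exist1 R H Hm Hp Vm G1m G2m M Vlin_m Glin_m V0_m Vcl_m
  (Gbd_m hM) Gsurj_m Green_m Vmax_m l hl y.
by exists (a.2, a.1).
Qed.

Lemma gp_spec l y : Normc.normc l < 1 ->
  V (gammap T Gp l y) /\ (gammap T Gp l y).2 = l *: (gammap T Gp l y).1 /\
  Gp (gammap T Gp l y) = y.
Proof.
move=> hl; have [[a1 a2] [Va [ha Ga]]] := ex_plus hl y.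
have : exists a, Nplus T l a /\ Gp a = y.
  by exists (a1, a2); split => //; split => //; exists a1; rewrite /= in ha; rewrite ha.
move/(epsilon_spec (inhabits (0, 0))); rewrite -/(gammap T Gp l y).
by case: (gammap T Gp l y) => g1 g2 [[[x [-> ->]] Vg] Gg].
Qed.

Lemma gm_spec l y : Normc.normc l < 1 ->
  V (gammam T Gm l y) /\ (gammam T Gm l y).1 = l *: (gammam T Gm l y).2 /\
  Gm (gammam T Gm l y) = y.
Proof.
move=> hl; have [[a1 a2] [Va [ha Ga]]] := ex_minus hl y.
have : exists a, Nminus T l a /\ Gm a = y.
  by exists (a1, a2); split => //; split => //; exists a2; rewrite /= in ha; rewrite ha.
move/(epsilon_spec (inhabits (0, 0))); rewrite -/(gammam T Gm l y).
by case: (gammam T Gm l y) => g1 g2 [[[x [-> ->]] Vg] Gg].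
Qed.

Lemma adj_spec m y : Normc.normc m < 1 ->
  (forall u, hip Hm (Weyl T Gp Gm m u) y = hip Hp u (adjoint (Weyl T Gp Gm m) y)) /\
  adjoint (Weyl T Gp Gm m) y = Gp (gammam T Gm m^* y).
Proof.
move=> hm.
have hm' : Normc.normc m^* < 1 by rewrite normc_conj.
have [Vb [hb Gb]] := gm_spec y hm'.
set b := gammam T Gm m^* y in Vb hb Gb *.
have hx : forall u, hip Hm (Weyl T Gp Gm m u) y = hip Hp u (Gp b).
  move=> u; have [Va [ha Ga]] := gp_spec u hm.
  have g := Green_p Va Vb.
  rewrite ha hb hipZl hipZr conjCK subrr Ga Gb in g.
  rewrite /Weyl; apply/eqP; rewrite -subr_eq0 -oppr_eq0 opprB -g //.
have hadj : forall u, hip Hm (Weyl T Gp Gm m u) y = hip Hp u (adjoint (Weyl T Gp Gm m) y).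
  rewrite /adjoint; apply: (epsilon_spec (inhabits (0 : Hp))
    (fun x => forall u, hip Hm (Weyl T Gp Gm m u) y = hip Hp u x)).
  by exists (Gp b).
split => //; apply: uniq_r => u; by rewrite -hadj hx.
Qed.


Lemma eps_uniq (X : hilbert R) (f : X -> C) (w0 : X) :
  (forall y, hip X w0 y = f y) ->
  epsilon (inhabits (0 : X)) (fun w => forall y, hip X w y = f y) = w0.
Proof.
move=> h; have := epsilon_spec (inhabits (0 : X)) (fun w => forall y, hip X w y = f y)
  (ex_intro _ w0 h).
move=> h'; apply: uniq_l => y; by rewrite h' h.
Qed.

Lemma ne1 (l m : C) : Normc.normc l < 1 -> Normc.normc m < 1 -> 1 - l * m^* != 0.
Proof.
move=> hl hm; apply/negP; rewrite subr_eq0 => /eqP h.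
have h1 : Normc.normc (1 : C) = 1 by rewrite /= expr0n expr1n addr0 sqrtr1.
have := congr1 (@Normc.normc R) h; rewrite Normc.normcM normc_conj h1.
have := normc_ge0' l; have := normc_ge0' m; nra.
Qed.

Lemma conj_lt1 (l : C) : Normc.normc l < 1 -> Normc.normc l^* < 1.
Proof. by rewrite normc_conj. Qed.

Lemma part1 l m y : Normc.normc l < 1 -> Normc.normc m < 1 ->
  Kpp T Gm l m y = (1 - l * m^*)^-1 *:
    (y - Weyl T Gp Gm l (adjoint (Weyl T Gp Gm m) y)).
Proof.
move=> hl hm; rewrite /Kpp /phimdag; apply: eps_uniq => y'.
rewrite /hat /phim.
have [Va [ha Ga]] := gm_spec y (conj_lt1 hm).
have [Vb [hb Gb]] := gm_spec y' (conj_lt1 hl).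
have g := Green_p Va Vb.
rewrite ha hb hipZl hipZr conjCK Ga Gb -(adj_spec y hm).2 -(adj_spec y' hl).2 in g.
rewrite hipZl hipBl (adj_spec y' hl).1.
set X := hip H _ _ in g *.
set P := hip Hp _ _ in g *; set Q := hip Hm y y' in g *.
have hP : P = m^* * (l * X) - X + Q by rewrite g; ring.
rewrite hP; apply: (mulfI (ne1 hl hm)); rewrite mulrA mulfV ?ne1 // mul1r; ring.
Qed.

Lemma part2 l m y : Normc.normc l < 1 -> Normc.normc m < 1 ->
  Kmm T Gp l m y = (1 - l * m^*)^-1 *:
    (y - adjoint (Weyl T Gp Gm l^*) (Weyl T Gp Gm m^* y)).
Proof.
move=> hl hm; rewrite /Kmm /phipdag; apply: eps_uniq => y'.
rewrite /hat /phip.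
have [Va [ha Ga]] := gp_spec y (conj_lt1 hm).
have [Vb [hb Gb]] := gp_spec y' (conj_lt1 hl).
have g := Green_p Va Vb.
rewrite ha hb hipZl hipZr conjCK Ga Gb in g.
rewrite hipZl hipBl.
rewrite (hip_sym y' (adjoint _ _)) -(adj_spec _ (conj_lt1 hl)).1 -hip_sym.
rewrite /Weyl.
set X := hip H _ _ in g *.
set P := hip Hm _ _ in g *; set Q := hip Hp y y' in g *.
have hP : P = Q - (X - m^* * (l * X)) by rewrite g; ring.
rewrite hP; apply: (mulfI (ne1 hl hm)); rewrite mulrA mulfV ?ne1 // mul1r; ring.
Qed.

Lemma kpm_quot l n y y' : Normc.normc l < 1 -> Normc.normc n < 1 -> l != n ->
  hip Hm ((l - n)^-1 *: (Weyl T Gp Gm l y - Weyl T Gp Gm n y)) y' =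
  hip H (phip T Gp n y) (phim T Gm l^* y').
Proof.
move=> hl hn lnn; rewrite /phip /phim.
have [Va [ha Ga]] := gp_spec y hn.
have [Vb [hb Gb]] := gm_spec y' (conj_lt1 hl).
have g := Green_p Va Vb.
rewrite ha hb hipZl hipZr conjCK Ga Gb -(adj_spec y' hl).2 -(adj_spec y' hl).1 in g.
rewrite hipZl hipBl.
rewrite /Weyl in g *.
set X := hip H _ _ in g *.
have ln0 : l - n != 0 by rewrite subr_eq0.
rewrite -g; apply: (mulfI ln0); rewrite mulrA mulfV // mul1r; ring.
Qed.

Lemma kmp_quot l n y y' : Normc.normc l < 1 -> Normc.normc n < 1 -> l != n^* ->
  hip Hp ((l - n^*)^-1 *: (adjoint (Weyl T Gp Gm l^*) y - adjoint (Weyl T Gp Gm n) y)) y' =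
  hip H (phim T Gm n^* y) (phip T Gp l^* y').
Proof.
move=> hl hn lnn; rewrite /phip /phim.
have [Va [ha Ga]] := gm_spec y (conj_lt1 hn).
have [Vb [hb Gb]] := gp_spec y' (conj_lt1 hl).
have g := Green_p Va Vb.
rewrite ha hb hipZl hipZr conjCK Ga Gb -(adj_spec y hn).2 in g.
rewrite -/(Weyl T Gp Gm l^* y') (hip_sym (Weyl T Gp Gm l^* y') y) (adj_spec y (conj_lt1 hl)).1 -hip_sym in g.
rewrite hipZl hipBl.
set X := hip H _ _ in g *.
have ln0 : l - n^* != 0 by rewrite subr_eq0.
have -> : hip Hp (adjoint (Weyl T Gp Gm l^*) y) y' - hip Hp (adjoint (Weyl T Gp Gm n) y) y'
  = - (n^* * X - l * X) by rewrite g opprB.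
apply: (mulfI ln0); rewrite mulrA mulfV // mul1r; ring.
Qed.


Lemma part3 l m y : Normc.normc l < 1 -> Normc.normc m < 1 -> l != m^* ->
  Kpm T Gp Gm l m y = (l - m^*)^-1 *: (Weyl T Gp Gm l y - Weyl T Gp Gm m^* y).
Proof.
move=> hl hm lm; rewrite /Kpm /phimdag; apply: eps_uniq => y'.
exact: kpm_quot hl (conj_lt1 hm) lm.
Qed.

Lemma part5 l m y : Normc.normc l < 1 -> Normc.normc m < 1 -> l != m^* ->
  Kmp T Gp Gm l m y = (l - m^*)^-1 *:
    (adjoint (Weyl T Gp Gm l^*) y - adjoint (Weyl T Gp Gm m) y).
Proof.
move=> hl hm lm; rewrite /Kmp /phipdag; apply: eps_uniq => y'.
exact: kmp_quot hl hm lm.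
Qed.

Lemma gm_swap l y : Normc.normc l < 1 ->
  Vm ((gammam T Gm l y).2, (gammam T Gm l y).1) /\
  ((gammam T Gm l y).2, (gammam T Gm l y).1).2 =
     l *: ((gammam T Gm l y).2, (gammam T Gm l y).1).1 /\
  G1m ((gammam T Gm l y).2, (gammam T Gm l y).1) = y.
Proof.
move=> hl; have [Va [ha Ga]] := gm_spec y hl.
by rewrite /Vm /G1m /= -surjective_pairing.
Qed.

Lemma inv_bound (x z t : R) : 0 < t -> x * t <= z -> x <= t^-1 * z.
Proof. by move=> t0 h; rewrite mulrC ler_pdivlMr. Qed.

Lemma near_lt1 (l n : C) : Normc.normc l < 1 ->
  Normc.normc (n - l) < (1 - Normc.normc l) / 2 -> Normc.normc n < 1.
Proof.
move=> hl hn; have := le_normcD (n - l) l; rewrite addrNK.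
have := normc_ge0' (n - l); lra.
Qed.

Lemma part4 l : Normc.normc l < 1 -> forall e : C, 0 < e ->
  exists d : C, 0 < d /\ forall n : C, n != l -> `|n - l| < d -> forall y : Hp,
    hnorm (Kpm T Gp Gm l l^* y - (l - n)^-1 *: (Weyl T Gp Gm l y - Weyl T Gp Gm n y))
      <= e * hnorm y.
Proof.
move=> hl.
have p1 : 0 < 1 - Normc.normc l by rewrite subr_gt0.
apply: (@limit_gen R H Hm Hp (fun n y => phip T Gp n y) (fun y' => phim T Gm l^* y')
  (fun n y => (l - n)^-1 *: (Weyl T Gp Gm l y - Weyl T Gp Gm n y))
  (fun y => Kpm T Gp Gm l l^* y) l ((1 - Normc.normc l)^-1)
  (2 / (1 - Normc.normc l) ^+ 2) ((1 - Normc.normc l) / 2)).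
- by rewrite divr_gt0.
- by rewrite invr_ge0 ltW.
- by rewrite divr_ge0 ?exprn_ge0 ?ltW.
- move=> y'; have [Va [ha Ga]] := gm_swap y' (conj_lt1 hl).
  have := boundK Green_m (conj_lt1 hl) Va ha; rewrite Ga normc_conj /=.
  exact: inv_bound.
- move=> n y hn; have hn1 := near_lt1 hl hn.
  have [Va [ha Ga]] := gp_spec y hl; have [Vb [hb Gb]] := gp_spec y hn1.
  exact: (lipL Vlin_p Glin_p Green_p hl hn Va ha Ga Vb hb Gb).
- move=> n y y' hn nl; have hn1 := near_lt1 hl hn.
  by apply: kpm_quot => //; rewrite eq_sym.
- move=> y [w hw]; rewrite /Kpm /phimdag conjCK.
  apply: (epsilon_spec (inhabits (0 : Hm))
    (fun w => forall y', hip Hm w y' = hat (phip T Gp l y) (phim T Gm l^* y'))).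
  by exists w.
Qed.

Lemma part6 l : Normc.normc l < 1 -> forall e : C, 0 < e ->
  exists d : C, 0 < d /\ forall n : C, n != l^* -> `|n - l^*| < d -> forall y : Hm,
    hnorm (Kmp T Gp Gm l l^* y - (l - n^*)^-1 *:
      (adjoint (Weyl T Gp Gm l^*) y - adjoint (Weyl T Gp Gm n) y)) <= e * hnorm y.
Proof.
move=> hl.
have p1 : 0 < 1 - Normc.normc l by rewrite subr_gt0.
have hl' := conj_lt1 hl.
apply: (@limit_gen R H Hp Hm (fun n y => phim T Gm n^* y) (fun y' => phip T Gp l^* y')
  (fun n y => (l - n^*)^-1 *: (adjoint (Weyl T Gp Gm l^*) y - adjoint (Weyl T Gp Gm n) y))
  (fun y => Kmp T Gp Gm l l^* y) l^* ((1 - Normc.normc l)^-1)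
  (2 / (1 - Normc.normc l) ^+ 2) ((1 - Normc.normc l) / 2)).
- by rewrite divr_gt0.
- by rewrite invr_ge0 ltW.
- by rewrite divr_ge0 ?exprn_ge0 ?ltW.
- move=> y'; have [Va [ha Ga]] := gp_spec y' hl'.
  have := boundK Green_p hl' Va ha; rewrite Ga normc_conj.
  exact: inv_bound.
- move=> n y hn.
  have e1 : Normc.normc (n^* - l) = Normc.normc (n - l^*).
    by rewrite -normc_conj rmorphB /= conjCK.
  rewrite -e1 in hn *; have hn1 := near_lt1 hl hn.
  have [Va [ha Ga]] := gm_swap y hl; have [Vb [hb Gb]] := gm_swap y hn1.
  rewrite conjCK.
  exact: (lipL Vlin_m Glin_m Green_m hl hn Va ha Ga Vb hb Gb).
- move=> n y y' hn nl.
  have hn1 : Normc.normc n < 1.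
    rewrite -normc_conj; apply: (near_lt1 hl).
    by rewrite -normc_conj rmorphB /= conjCK in hn.
  apply: kmp_quot => //; apply: contra nl => /eqP ->; by rewrite conjCK.
- move=> y [w hw]; rewrite /Kmp /phipdag.
  apply: (epsilon_spec (inhabits (0 : Hp))
    (fun w => forall y', hip Hp w y' = hat (phim T Gm l^*^* y) (phip T Gp l^* y'))).
  by exists w.
Qed.

End Main.

Lemma lt1C (R : realType) (l : R[i]) : `|l| < 1 -> Normc.normc l < 1.
Proof. by move=> h; rewrite -(@ltcR R) rmorph1. Qed.

Theorem theorem4p13 (R : realType) (H : hilbert R) (T : H -> H)
    (Hp Hm : hilbert R) (Gp : H * H -> Hp) (Gm : H * H -> Hm) :
  separable H -> infinite_dim H ->
  is_contraction T -> cnu T ->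
  boundary_quadruple T Gp Gm ->
  let B := Weyl T Gp Gm in
  let Bs := fun (l : R[i]) => adjoint (B l) in
  (* l, m in D_+ *)
  (forall l m : R[i], `|l| < 1 -> `|m| < 1 -> forall y : Hm,
     Kpp T Gm l m y = (1 - l * m^*)^-1 *: (y - B l (Bs m y))) /\
  (* l, m in D_- *)
  (forall l m : R[i], `|l| < 1 -> `|m| < 1 -> forall y : Hp,
     Kmm T Gp l m y = (1 - l * m^*)^-1 *: (y - Bs l^* (B m^* y))) /\
  (* l in D_+, m in D_-, l <> conj m *)
  (forall l m : R[i], `|l| < 1 -> `|m| < 1 -> l != m^* -> forall y : Hp,
     Kpm T Gp Gm l m y = (l - m^*)^-1 *: (B l y - B m^* y)) /\
  (* l in D_+, m = conj l in D_-: limit of the difference quotient,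
     in operator norm *)
  (forall l : R[i], `|l| < 1 -> forall e : R[i], 0 < e ->
     exists d : R[i], 0 < d /\ forall n : R[i], `|n| < 1 -> n != l ->
       `|n - l| < d -> forall y : Hp,
       hnorm (Kpm T Gp Gm l l^* y - (l - n)^-1 *: (B l y - B n y))
         <= e * hnorm y) /\
  (* l in D_-, m in D_+, l <> conj m *)
  (forall l m : R[i], `|l| < 1 -> `|m| < 1 -> l != m^* -> forall y : Hm,
     Kmp T Gp Gm l m y = (l - m^*)^-1 *: (Bs l^* y - Bs m y)) /\
  (* l in D_-, m = conj l in D_+: limit of the difference quotient,
     in operator norm *)
  (forall l : R[i], `|l| < 1 -> forall e : R[i], 0 < e ->
     exists d : R[i], 0 < d /\ forall n : R[i], `|n| < 1 -> n != l^* ->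
       `|n - l^*| < d -> forall y : Hm,
       hnorm (Kmp T Gp Gm l l^* y - (l - n^*)^-1 *: (Bs l^* y - Bs n y))
         <= e * hnorm y).
Proof.
move=> _ _ _ _ hBQ B Bs; rewrite /Bs /B.
split; first by move=> l m hl hm y; exact: (part1 hBQ y (lt1C hl) (lt1C hm)).
split; first by move=> l m hl hm y; exact: (part2 hBQ y (lt1C hl) (lt1C hm)).
split; first by move=> l m hl hm lm y; exact: (part3 hBQ y (lt1C hl) (lt1C hm) lm).
split.
  move=> l hl e e0; have [d [d0 hd]] := part4 hBQ (lt1C hl) e0.
  by exists d; split => // n _; exact: hd.
split; first by move=> l m hl hm lm y; exact: (part5 hBQ y (lt1C hl) (lt1C hm) lm).
move=> l hl e e0; have [d [d0 hd]] := part6 hBQ (lt1C hl) e0.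
by exists d; split => // n _; exact: hd.
Qed.
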